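(* Every one-input one-output tAND net is sub-sound.
   Context: Petri nets and markings. A Petri net is a triple $(P,T,F)$ with $P$ a finite set of places, $T$ a finite set of transitions, $P\cap T=\emptyset$, and $F\subseteq (P\times T)\cup(T\times P)$. For a node $x$, $\bullet x=\{y\mid (y,x)\in F\}$, $x\bullet=\{y\mid (x,y)\in F\}$. A marking is a multiset over $P$ (a function $P\to\mathbb N$); sets of places are identified with bags of multiplicity one, $+,-,\le$ are pointwise, and $k.m$ is the sum of $k$ copies of $m$. Transition $t$ is enabled at $m$ iff $\bullet t\le m$, firing gives $m-\bullet t+t\bullet$, and $m\xrightarrow{*}m'$ denotes reachability by a finite (possibly empty) firing sequence. Workflow nets. A pWF net is $(P,T,F,I,O)$ with $(P,T,F)$ a Petri net, $I,O\subseteq P$ non-empty, every node reachable by a directed path from some node of $I$, and some node of $O$ reachable from every node. A tWF net is the same with $I,O$ non-empty subsets of $T$. Input nodes may have incoming edges and output nodes outgoing edges. A WF net is one-input one-output if $|I|=|O|=1$. The place-completion $\mathrm{pc}(N)$ of a tWF net $N=(P,T,F,I,O)$ is obtained by adding two fresh places $p_i,p_o$ with edges $(p_i,t)$ for all $t\in I$ and $(t,p_o)$ for all $t\in O$, and taking input set $\{p_i\}$ and output set $\{p_o\}$. AND nets. An AND net is an acyclic WF net $(P,T,F,I,O)$ such that for every place $p$: (1) either $p\in I$ and $|\bullet p|=0$, or $p\notin I$ and $|\bullet p|=1$; and (2) either $p\in O$ and $|p\bullet|=0$, or $p\notin O$ and $|p\bullet|=1$. A tAND net is an AND net that is a tWF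 net. Sub-soundness. A pWF net is sub-sound if for all integers $k\ge k'\ge 0$ and every marking $m'$: if $k.I\xrightarrow{*}m'+k'.O$ then $m'\xrightarrow{*}(k-k').O$. A tWF net is sub-sound iff its place-completion is. *)

(* Defs.v *)
From mathcomp Require Import all_boot.
Set Implicit Arguments. Unset Strict Implicit. Unset Printing Implicit Defensive.

(* A Petri net (P,T,F): P and T are disjoint finite types, and the flow
   relation F ⊆ (P×T) ∪ (T×P) is given by its two parts. *)
Record petri_net := PetriNet {
  place : finType;
  trans : finType;
  arc_pt : place -> trans -> bool;
  arc_tp : trans -> place -> bool
}.

Definition node (N : petri_net) : finType := (place N + trans N)%type.

Definition flow (N : petri_net) : rel (node N) :=
  fun x y => match x, y with
  | inl p, inr t => arc_pt p t
  | inr t, inl p => arc_tp t p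
  | _, _ => false
  end.

Definition marking (N : petri_net) := {ffun place N -> nat}.

Definition kset (N : petri_net) (k : nat) (S : {set place N}) : marking N :=
  [ffun p => k * (p \in S)].

Definition madd (N : petri_net) (m1 m2 : marking N) : marking N :=
  [ffun p => m1 p + m2 p].

Definition enabled (N : petri_net) (m : marking N) (t : trans N) : bool :=
  [forall p, (arc_pt p t : nat) <= m p].

Definition fire (N : petri_net) (m : marking N) (t : trans N) : marking N :=
  [ffun p => m p - arc_pt p t + arc_tp t p].

Inductive reach (N : petri_net) : marking N -> marking N -> Prop :=
| reach_refl m : reach m m
| reach_step m t m' : enabled m t -> reach (fire m t) m' -> reach m m'.

Definition is_WF (N : petri_net) (I O : {set node N}) : Prop :=
  I != set0 /\ O != set0 /\
  (forall x : node N, exists2 i, i \in I & connect (@flow N) i x) /\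
  (forall x : node N, exists2 o, o \in O & connect (@flow N) x o).

Definition pnodes (N : petri_net) (S : {set place N}) : {set node N} :=
  [set x : node N | if x is inl p then p \in S else false].
Definition tnodes (N : petri_net) (S : {set trans N}) : {set node N} :=
  [set x : node N | if x is inr t then t \in S else false].

Definition is_pWF (N : petri_net) (I O : {set place N}) : Prop :=
  is_WF (pnodes I) (pnodes O).
Definition is_tWF (N : petri_net) (I O : {set trans N}) : Prop :=
  is_WF (tnodes I) (tnodes O).

Definition acyclic_net (N : petri_net) : Prop :=
  forall x y : node N, flow x y -> ~~ connect (@flow N) y x.

Definition preset_p (N : petri_net) (p : place N) : {set trans N} :=
  [set t | arc_tp t p].
Definition postset_p (N : petri_net) (p : place N) : {set trans N} :=
  [set t | arc_pt p t].

Definition is_AND (N : petri_net) (I O : {set node N}) : Prop :=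
  acyclic_net N /\ is_WF I O /\
  forall p : place N,
    ((inl p \in I) && (#|preset_p p| == 0) ||
     (inl p \notin I) && (#|preset_p p| == 1)) /\
    ((inl p \in O) && (#|postset_p p| == 0) ||
     (inl p \notin O) && (#|postset_p p| == 1)).

Definition is_tAND (N : petri_net) (I O : {set trans N}) : Prop :=
  is_AND (tnodes I) (tnodes O).

Definition pWF_sub_sound (N : petri_net) (I O : {set place N}) : Prop :=
  forall (k k' : nat) (m' : marking N), k' <= k ->
    reach (kset k I) (madd m' (kset k' O)) -> reach m' (kset (k - k') O).

(* Place completion: places P + bool, with inr false = p_i, inr true = p_o. *)
Definition pc_net (N : petri_net) (I O : {set trans N}) : petri_net :=
  @PetriNet (place N + bool)%type (trans N)
    (fun x t => match x with inl p => arc_pt p t | inr b => ~~ b && (t \in I) end)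
    (fun t x => match x with inl p => arc_tp t p | inr b => b && (t \in O) end).

Definition pc_in (N : petri_net) (I O : {set trans N}) : {set place (pc_net I O)} :=
  [set inr false].
Definition pc_out (N : petri_net) (I O : {set trans N}) : {set place (pc_net I O)} :=
  [set inr true].

Definition tWF_sub_sound (N : petri_net) (I O : {set trans N}) : Prop :=
  pWF_sub_sound (pc_in I O) (pc_out I O).

(* Main.v *)
Require Import Defs.
From mathcomp Require Import all_boot.
From mathcomp Require Import zify.
Set Implicit Arguments. Unset Strict Implicit. Unset Printing Implicit Defensive.

Definition SE (N : petri_net) (m0 M : marking N) (c : trans N -> nat) :=
  forall x, M x + \sum_u (arc_pt x u : nat) * c u = m0 x + \sum_u (arc_tp u x : nat) * c u.

Lemma sum_shift (T : finType) (f : T -> nat) c t :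
  \sum_u f u * (c u + (u == t)) = \sum_u f u * c u + f t.
Proof.
under eq_bigr => u _ do rewrite mulnDr.
rewrite big_split /=; congr (_ + _).
rewrite (bigD1 t) //= eqxx muln1 big1 ?addn0 // => u /negbTE ->; by rewrite muln0.
Qed.

Lemma sum_one (T : finType) (f : T -> bool) c t :
  (forall u, f u = (u == t)) -> \sum_u (f u : nat) * c u = c t.
Proof.
move=> Hf; rewrite (bigD1 t) //= Hf eqxx mul1n big1 ?addn0 // => u.
by rewrite Hf => /negbTE ->.
Qed.

Lemma sum_zero (T : finType) (f : T -> bool) c :
  (forall u, f u = false) -> \sum_u (f u : nat) * c u = 0.
Proof. by move=> Hf; rewrite big1 // => u _; rewrite Hf. Qed.

Lemma sum_delta (T : finType) (t : T) : \sum_u ((u == t) : nat) = 1.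
Proof.
rewrite (bigD1 t) //= eqxx big1 // => u /negbTE ->; done.
Qed.

Lemma reach_SE N (m0 m : marking N) : reach m0 m -> exists c, SE m0 m c.
Proof.
elim => [m1|m1 t m2 en _ [c Hc]].
- exists (fun _ => 0) => x; by rewrite !big1 // => u _; rewrite muln0.
- exists (fun u => c u + (u == t)) => x.
  have := Hc x; have := forallP en x; rewrite !sum_shift /fire ffunE. lia.
Qed.

Lemma SE_fire N (m0 M : marking N) c t :
  SE m0 M c -> enabled M t -> SE m0 (fire M t) (fun u => c u + (u == t)).
Proof.
move=> Hc en x; have := Hc x; have := forallP en x; rewrite !sum_shift /fire ffunE. lia.
Qed.

Lemma SE_ext N (m0 M M' : marking N) c :
  SE m0 M c -> (forall x, M x = M' x) -> SE m0 M' c.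
Proof. by move=> H E x; rewrite -E. Qed.

Lemma rank_lt N (acy : acyclic_net N) (x y : node N) : flow x y ->
  #|[set z | connect (@flow N) z x]| < #|[set z | connect (@flow N) z y]|.
Proof.
move=> fxy; apply: proper_card; apply/properP; split.
- apply/subsetP => z; rewrite !inE => h; exact: connect_trans h (connect1 fxy).
- exists y; rewrite !inE ?connect0 //; exact: acy fxy.
Qed.

Lemma SE_unpack N (I O : {set trans N}) i o k (M : marking (pc_net I O)) c :
  (forall u, (u \in I) = (u == i)) -> (forall u, (u \in O) = (u == o)) ->
  SE (kset k (pc_in I O)) M c ->
  (forall p t0 t1, (forall u, arc_tp u p = (u == t0)) ->
      (forall u, arc_pt p u = (u == t1)) -> M (inl p) + c t1 = c t0) /\
  M (inr false) + c i = k /\ M (inr true) = c o.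
Proof.
move=> HI HO HSE; split; [|split].
- move=> p t0 t1 H0 H1; have := HSE (inl p).
  rewrite (@sum_one _ (fun u => arc_pt p u) c t1 H1) (@sum_one _ (fun u => arc_tp u p) c t0 H0).
  by rewrite ffunE /pc_in inE /= muln0.
- have := HSE (inr false).
  rewrite (@sum_one _ (fun u => u \in I) c i HI) (@sum_zero _ (fun u => false) c) //.
  by rewrite ffunE /pc_in inE eqxx muln1 addn0.
- have := HSE (inr true).
  rewrite (@sum_one _ (fun u => u \in O) c o HO) (@sum_zero _ (fun u => false) c) //.
  by rewrite ffunE /pc_in inE /= muln0 addn0 add0n.
Qed.

Lemma SE_bound N (I O : {set trans N}) i o k (M : marking (pc_net I O)) c :
  (forall u, (u \in I) = (u == i)) -> (forall u, (u \in O) = (u == o)) ->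
  (forall p : place N, exists t0, forall u, arc_tp u p = (u == t0)) ->
  (forall p : place N, exists t1, forall u, arc_pt p u = (u == t1)) ->
  (forall t : trans N, connect (@flow N) (inr i) (inr t)) ->
  SE (kset k (pc_in I O)) M c -> forall t, c t <= k.
Proof.
move=> HI HO Hpre Hpost Hwf HSE.
have [U1 [U2 _]] := SE_unpack HI HO HSE.
pose Q (x : node N) : Prop := match x with
  | inl p => forall u, arc_pt p u -> c u <= k | inr t => c t <= k end.
have step : forall x y, flow x y -> Q x -> Q y.
  move=> [p|t] [p'|t'] //= f.
  - by move=> H; apply: H.
  - move=> Ht u hu.
    have [t0 H0] := Hpre p'; have [t1 H1] := Hpost p'.
    have := U1 _ _ _ H0 H1.
    move: f hu; rewrite H0 H1 => /eqP <- /eqP ->. lia.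
have base : Q (inr i) by rewrite /=; lia.
suff H : forall pth x, Q x -> path (@flow N) x pth -> Q (last x pth).
  move=> t; have /connectP [pth Hp Hl] := Hwf t.
  by have := H pth _ base Hp; rewrite -Hl.
elim => //= y pth IH x Qx /andP [fxy hp]; exact: IH (step _ _ fxy Qx) hp.
Qed.

Lemma drive N (I O : {set trans N}) i o k k' :
  (forall u, (u \in I) = (u == i)) -> (forall u, (u \in O) = (u == o)) ->
  (forall p : place N, exists t0, forall u, arc_tp u p = (u == t0)) ->
  (forall p : place N, exists t1, forall u, arc_pt p u = (u == t1)) ->
  (forall t : trans N, connect (@flow N) (inr i) (inr t)) ->
  acyclic_net N ->
  forall n (m : marking (pc_net I O)) c, \sum_u (k - c u) < n ->
  SE (kset k (pc_in I O)) (madd m (kset k' (pc_out I O))) c ->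
  reach m (kset (k - k') (pc_out I O)).
Proof.
move=> HI HO Hpre Hpost Hwf acy.
elim => // n IH m c Hn HSE.
have Hb := SE_bound HI HO Hpre Hpost Hwf HSE.
have [U1 [U2 U3]] := SE_unpack HI HO HSE.
move: U1 U2 U3; rewrite !ffunE /pc_out !inE /= muln0 !addn0 muln1 => U1 U2 U3.
case: (boolP [exists t, c t < k]) => [/existsP [t0 Ht0] | Hall].
- pose r (t : trans N) := #|[set z | connect (@flow N) z (inr t)]|.
  case: (@arg_minnP _ t0 (fun t => c t < k) r Ht0) => ts Hts Hmin.
  have en : enabled m ts.
    apply/forallP => -[p|[|]] /=.
    + case: (boolP (arc_pt p ts)) => //= hp.
      have [t0' H0] := Hpre p; have [t1' H1] := Hpost p.
      have ets : ts = t1' by move: hp; rewrite H1 => /eqP.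
      subst t1'; have := U1 _ _ _ H0 H1; rewrite !ffunE inE /= muln0 addn0.
      have : c t0' <> c ts.
        move=> E; have := Hmin t0'; rewrite /= E => /(_ Hts).
        have f1 : flow (inr t0' : node N) (inl p) by rewrite /= H0.
        have f2 : flow (inl p : node N) (inr ts) by rewrite /= hp.
        have := rank_lt acy f1; have := rank_lt acy f2; rewrite /r => a b d; have := leq_ltn_trans d (ltn_trans b a); by rewrite ltnn.
      lia.
    + by [].
    + rewrite HI; case: eqP => //= E; rewrite E in Hts; lia.
  refine (reach_step en _).
  apply: (IH _ (fun u => c u + (u == ts))).
  + have E : \sum_u (k - c u) = \sum_u (k - (c u + (u == ts))) + \sum_u ((u == ts) : nat).
      rewrite -big_split; apply: eq_bigr => u _ /=.
      case: eqP => [->|_]; lia.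
    move: Hn; rewrite E sum_delta; lia.
  + apply: (SE_ext (SE_fire HSE _)).
    * apply/forallP => x; rewrite ffunE; apply: leq_trans (forallP en x) _; exact: leq_addr.
    * move=> x; have := forallP en x; rewrite !ffunE; lia.
- have Ek : forall t, c t = k.
    move=> t; have := Hb t; move/existsPn: Hall => /(_ t); lia.
  have -> : m = kset (k - k') (pc_out I O).
    apply/ffunP => -[p|[|]]; rewrite !ffunE /pc_out inE /=.
    + have [t0' H0] := Hpre p; have [t1' H1] := Hpost p.
      have := U1 _ _ _ H0 H1; rewrite !ffunE inE /= muln0 addn0 !Ek; lia.
    + rewrite Ek in U3; lia.
    + rewrite Ek in U2; lia.
  exact: reach_refl.
Qed.

Theorem mainTheorem19 (N : petri_net) (I O : {set trans N}) :
  #|I| = 1 -> #|O| = 1 -> is_tAND I O -> tWF_sub_sound I O.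
Proof.
move=> /eqP /cards1P [i HI] /eqP /cards1P [o HO] [acy [[_ [_ [Hwf _]]] Hpl]].
have HI' : forall u, (u \in I) = (u == i) by move=> u; rewrite HI inE.
have HO' : forall u, (u \in O) = (u == o) by move=> u; rewrite HO inE.
have Hpre : forall p : place N, exists t0, forall u, arc_tp u p = (u == t0).
  move=> p; have [H _] := Hpl p; move: H; rewrite /tnodes !inE /= => /cards1P [t0 E].
  by exists t0 => u; rewrite -in_set1 -E inE.
have Hpost : forall p : place N, exists t1, forall u, arc_pt p u = (u == t1).
  move=> p; have [_ H] := Hpl p; move: H; rewrite /tnodes !inE /= => /cards1P [t0 E].
  by exists t0 => u; rewrite -in_set1 -E inE.
have Hwf' : forall t : trans N, connect (@flow N) (inr i) (inr t).
  move=> t; have [[p|t'] ] := Hwf (inr t); rewrite /tnodes inE //= HI' => /eqP -> //.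
move=> k k' m' hk /reach_SE [c Hc].
exact: (drive HI' HO' Hpre Hpost Hwf' acy (n := (\sum_u (k - c u)).+1) (leqnn _) Hc).
Qed.
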